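(* Let $\mathcal V$ be a variety, $A\in\mathcal V$ and $\alpha,\beta\in\operatorname{Con}A$. \begin{enumerate} \item If $\mathcal V$ has a difference term, then for all $a,b,d\in A$ with $(a,b),(a,d)\in\alpha$: if $\big((a,b),(a,d)\big)\in\Delta_{\alpha\beta}$ then $(b,d)\in[\alpha,\beta]$. \item If $\mathcal V$ has a weak-difference term and $\alpha$ is abelian, then for all $b,d\in A$: there exists $a\in A$ with $(a,b),(a,d)\in\alpha$ and $\big((a,b),(a,d)\big)\in\Delta_{\alpha\beta}$ if and only if $(b,d)\in[\beta,\alpha]$. \item If $\mathcal V$ has a weak-difference term and $\alpha$ is abelian, then $\Delta_{\alpha\alpha}=\Delta_{\alpha\gamma}\wedge\hat\alpha$ for every $\gamma\in\operatorname{Con}A$ with $\alpha\le\gamma\le(0:\alpha)$. \item If $\mathcal V$ has a difference term $m$ and $\alpha$ is abelian, then for all $(a,b),(c,d)\in\alpha$ the following are equivalent: (a) $\big((a,b),(c,d)\big)\in\Delta_{\alpha\beta}$; (b) $\big((a,b),(c,m(b,a,c))\big)\in\Delta_{\alpha\beta}$ and $(d,m(b,a,c))\in[\alpha,\beta]$; (c) $(c,a)\in\beta$, $(a,b)\in\alpha$, and $(d,m(b,a,c))\in[\alpha,\beta]$. \end{enumerate}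
   Context: All algebras are in the sense of universal algebra. For an algebra $A$ and $\alpha,\beta\in\operatorname{Con}A$, $[\alpha,\beta]$ denotes the term-condition (TC) commutator; $0$ denotes the equality relation and $1$ the total relation. A congruence $\alpha$ is abelian if $[\alpha,\alpha]=0$. $A(\alpha)=\{(x,y)\in A\times A:(x,y)\in\alpha\}$ is the congruence $\alpha$ viewed as a subalgebra of $A\times A$. $\Delta_{\alpha\beta}$ is the congruence of $A(\alpha)$ generated by $\{((u,u),(v,v)):(u,v)\in\beta\}$. $\hat\alpha$ is the equivalence relation on $A(\alpha)$ given by $(x,y)\mathrel{\hat\alpha}(u,v)$ iff $x,y,u,v$ all lie in one $\alpha$-class. $(0:\alpha)$ denotes the centralizer of $\alpha$, the largest congruence $\gamma$ with $[\gamma,\alpha]=0$. A variety $\mathcal V$ has a difference term if there is a ternary term $d$ such that for every $A\in\mathcal V$, $\theta\in\operatorname{Con}A$ and $(a,b)\in\theta$: $d(a,a,b)=b$ and $(d(a,b,b),a)\in[\theta,\theta]$. It has a weak-difference term if there is a ternary term $d$ such that for all such $A,\theta,(a,b)$: $(d(a,a,b),b)\in[\theta,\theta]$ and $(b,d(b,a,a))\in[\theta,\theta]$. *)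

(* Defs.v *)
From mathcomp Require Import all_boot.
Set Implicit Arguments.
Unset Strict Implicit.
Unset Printing Implicit Defensive.

Section UA.
Variable F : Type.
Variable ar : F -> nat.

Record algebra := Algebra {
  carrier :> Type;
  op : forall f : F, ('I_(ar f) -> carrier) -> carrier
}.

Inductive term (V : Type) : Type :=
| Var : V -> term V
| App : forall f : F, ('I_(ar f) -> term V) -> term V.

Fixpoint eval (A : algebra) (V : Type) (env : V -> A) (t : term V) : A :=
  match t with
  | Var v => env v
  | App f args => @op A f (fun i => eval env (args i))
  end.

(* A variety, presented as the class of models of a set of identities
   (Birkhoff's HSP theorem). *)
Definition identities := term nat -> term nat -> Prop.
Definition in_variety (E : identities) (A : algebra) : Prop :=
  forall s t, E s t -> forall env : nat -> A, eval env s = eval env t.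

Record is_con (A : algebra) (th : A -> A -> Prop) : Prop := IsCon {
  con_refl : forall x, th x x;
  con_sym : forall x y, th x y -> th y x;
  con_trans : forall x y z, th x y -> th y z -> th x z;
  con_compat : forall f (x y : 'I_(ar f) -> A),
      (forall i, th (x i) (y i)) -> th (@op A f x) (@op A f y)
}.

Definition Cg (A : algebra) (X : A -> A -> Prop) (x y : A) : Prop :=
  forall th, is_con th -> (forall u v, X u v -> th u v) -> th x y.

(* Term condition C(alpha, beta; delta): x-variables are inl, y-variables inr *)
Definition TC (A : algebra) (al be de : A -> A -> Prop) : Prop :=
  forall (t : term (nat + nat)%type) (a b c d : nat -> A),
    (forall n, al (a n) (b n)) -> (forall n, be (c n) (d n)) ->
    de (eval (fun v => match v with inl n => a n | inr n => c n end) t)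
       (eval (fun v => match v with inl n => a n | inr n => d n end) t) ->
    de (eval (fun v => match v with inl n => b n | inr n => c n end) t)
       (eval (fun v => match v with inl n => b n | inr n => d n end) t).

Definition comm (A : algebra) (al be : A -> A -> Prop) (x y : A) : Prop :=
  forall de, is_con de -> TC al be de -> de x y.

Definition abelian (A : algebra) (al : A -> A -> Prop) : Prop :=
  forall x y, comm al al x y -> x = y.

Definition centralizer (A : algebra) (al : A -> A -> Prop) (x y : A) : Prop :=
  exists ga, is_con ga /\ (forall u v, comm ga al u v -> u = v) /\ ga x y.

Definition Acar (A : algebra) (al : A -> A -> Prop) := {p : A * A | al p.1 p.2}.

Definition Aop (A : algebra) (al : A -> A -> Prop) (Hal : is_con al)
  (f : F) (args : 'I_(ar f) -> Acar al) : Acar al :=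
  exist (fun p : A * A => al p.1 p.2)
    (@op A f (fun i => (sval (args i)).1), @op A f (fun i => (sval (args i)).2))
    (con_compat Hal (fun i => svalP (args i))).

Definition Aalpha (A : algebra) (al : A -> A -> Prop) (Hal : is_con al)
  : algebra := @Algebra (Acar al) (Aop Hal).

Definition Delta (A : algebra) (al : A -> A -> Prop) (Hal : is_con al)
  (be : A -> A -> Prop) : Aalpha Hal -> Aalpha Hal -> Prop :=
  @Cg (Aalpha Hal) (fun p q : Acar al =>
      (sval p).1 = (sval p).2 /\ (sval q).1 = (sval q).2 /\
      be (sval p).1 (sval q).1).

Definition alphahat (A : algebra) (al : A -> A -> Prop) (Hal : is_con al)
  (p q : Aalpha Hal) : Prop :=
  let: (x, y) := sval p in let: (u, v) := sval q in
  [/\ al x y, al x u & al x v].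

Definition app3 (A : algebra) (d : term 'I_3) (x y z : A) : A :=
  eval (fun i : 'I_3 => match val i with 0 => x | 1 => y | _ => z end) d.

Definition is_difference_term (E : identities) (d : term 'I_3) : Prop :=
  forall B : algebra, in_variety E B ->
  forall th : B -> B -> Prop, is_con th -> forall a b : B, th a b ->
    app3 d a a b = b /\ comm th th (app3 d a b b) a.

Definition is_weak_difference_term (E : identities) (d : term 'I_3) : Prop :=
  forall B : algebra, in_variety E B ->
  forall th : B -> B -> Prop, is_con th -> forall a b : B, th a b ->
    comm th th (app3 d a a b) b /\ comm th th b (app3 d b a a).

Definition has_difference_term E := exists d, is_difference_term E d.
Definition has_weak_difference_term E := exists d, is_weak_difference_term E d.

End UA.

Arguments Var {F ar V}.
Arguments Delta {F ar A al} Hal be _ _.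
Arguments alphahat {F ar A al Hal} _ _.
Arguments Aalpha {F ar A al} Hal.

(* Main.v *)
Require Import Defs.
From mathcomp Require Import all_boot.
From Stdlib Require Import FunctionalExtensionality ProofIrrelevance.
Set Implicit Arguments.
Unset Strict Implicit.
Unset Printing Implicit Defensive.

Section Basics.
Variables (F : Type) (ar : F -> nat).

Fixpoint tsubst (V W : Type) (s : V -> term ar W) (t : term ar V) : term ar W :=
  match t with
  | Var v => s v
  | App f args => App (fun i => tsubst s (args i))
  end.

Lemma eval_subst (A : algebra ar) V W (s : V -> term ar W) (env : W -> A) t :
  eval env (tsubst s t) = eval (fun v => eval env (s v)) t.
Proof.
elim: t => [v|f args IH] //=.
f_equal; apply: functional_extensionality => i; exact: IH.
Qed.

Lemma eval_ext (A : algebra ar) V (e1 e2 : V -> A) t :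
  (forall v, e1 v = e2 v) -> eval e1 t = eval e2 t.
Proof. by move=> H; have -> : e1 = e2 by apply: functional_extensionality. Qed.

Definition env2 (A : Type) V W (e : V -> A) (x : W -> A) : V + W -> A :=
  fun s => match s with inl v => e v | inr w => x w end.

Lemma eval_con (A : algebra ar) (th : A -> A -> Prop) (Hth : is_con th) V
  (x y : V -> A) t : (forall v, th (x v) (y v)) -> th (eval x t) (eval y t).
Proof.
move=> Hv; elim: t => [v|f args IH] //=.
by apply: (con_compat Hth).
Qed.

Definition sel3 (X : Type) (x y z : X) (i : 'I_3) : X :=
  match val i with 0 => x | 1 => y | _ => z end.

Lemma eval_app3 (A : algebra ar) W (d : term ar 'I_3) (t1 t2 t3 : term ar W) (env : W -> A) :
  eval env (tsubst (sel3 t1 t2 t3) d) = app3 d (eval env t1) (eval env t2) (eval env t3).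
Proof.
rewrite eval_subst /app3; apply: eval_ext => i.
by rewrite /sel3; case: (val i) => [|[|?]].
Qed.

Lemma app3_con (A : algebra ar) (th : A -> A -> Prop) (Hth : is_con th) d x y z x' y' z' :
  th x x' -> th y y' -> th z z' -> th (app3 d x y z) (app3 d x' y' z').
Proof.
move=> H1 H2 H3; apply: (eval_con Hth) => i.
by case: (val i) => [|[|?]].
Qed.

Lemma TC_gen (A : algebra ar) (al be de : A -> A -> Prop)
  (ral : forall x, al x x) (rbe : forall x, be x x)
  (V W : countType) (t : term ar (V + W)) (a b : V -> A) (c d : W -> A) :
  TC al be de -> (forall v, al (a v) (b v)) -> (forall w, be (c w) (d w)) ->
  de (eval (env2 a c) t) (eval (env2 a d) t) -> de (eval (env2 b c) t) (eval (env2 b d) t).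
Proof.
move=> HTC Hab Hcd.
set x0 := eval (env2 a c) t.
pose ren := fun s : V + W => match s with inl v => @Var F ar (nat + nat)%type (inl (pickle v))
                                        | inr w => Var (inr (pickle w)) end.
pose t' := tsubst ren t.
pose lift := fun (U : countType) (g : U -> A) (n : nat) => odflt x0 (omap g (unpickle n)).
have E : forall (g : V -> A) (h : W -> A),
    eval (fun v => match v with inl n => lift V g n | inr n => lift W h n end) t'
    = eval (env2 g h) t.
  move=> g h; rewrite /t' eval_subst; apply: eval_ext => -[v|w] /=;
  by rewrite /lift pickleK.
have := HTC t' (lift V a) (lift V b) (lift W c) (lift W d).
rewrite !E; apply.
- by move=> n; rewrite /lift; case: (unpickle n) => /=.
- by move=> n; rewrite /lift; case: (unpickle n) => /=.
Qed.

End Basics.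
Section Comm.
Variables (F : Type) (ar : F -> nat) (A : algebra ar).

Lemma comm_con (al be : A -> A -> Prop) : is_con (comm al be).
Proof.
split.
- by move=> x de Hde _; exact: (con_refl Hde).
- by move=> x y H de Hde HT; apply: (con_sym Hde); apply: H.
- by move=> x y z H1 H2 de Hde HT; apply: (con_trans Hde (H1 _ Hde HT) (H2 _ Hde HT)).
- by move=> f x y H de Hde HT; apply: (con_compat Hde) => i; apply: H.
Qed.

Lemma comm_TC (al be : A -> A -> Prop) : TC al be (comm al be).
Proof.
move=> t a b c d Hab Hcd H de Hde HT.
by apply: (HT t a b c d Hab Hcd); apply: H.
Qed.

Lemma comm_least (al be de : A -> A -> Prop) : is_con de -> TC al be de ->
  forall x y, comm al be x y -> de x y.
Proof. by move=> Hde HT x y H; apply: H. Qed.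

Lemma comm_sub_r (al be : A -> A -> Prop) : is_con be ->
  forall x y, comm al be x y -> be x y.
Proof.
move=> Hbe x y H; apply: H => // t a b c d _ Hcd _.
by apply: (eval_con Hbe) => -[n|n] /=; [exact: (con_refl Hbe)|].
Qed.

Lemma comm_mono (th al be : A -> A -> Prop) :
  (forall x y, th x y -> al x y) -> (forall x y, th x y -> be x y) ->
  forall x y, comm th th x y -> comm al be x y.
Proof.
move=> H1 H2 x y H de Hde HT; apply: H => // t a b c d Hab Hcd.
by apply: HT => n; [apply: H1|apply: H2].
Qed.

Lemma Cg_con (X : A -> A -> Prop) : is_con (Cg X).
Proof.
split.
- by move=> x th Hth _; exact: (con_refl Hth).
- by move=> x y H th Hth HX; apply: (con_sym Hth); apply: H.
- by move=> x y z H1 H2 th Hth HX; apply: (con_trans Hth (H1 _ Hth HX) (H2 _ Hth HX)).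
- by move=> f x y H th Hth HX; apply: (con_compat Hth) => i; apply: H.
Qed.

Lemma Cg_gen (X : A -> A -> Prop) x y : X x y -> Cg X x y.
Proof. by move=> H th _ HX; apply: HX. Qed.

Lemma Cg_mono (X Y : A -> A -> Prop) : (forall x y, X x y -> Y x y) ->
  forall x y, Cg X x y -> Cg Y x y.
Proof. by move=> HXY x y H th Hth HY; apply: H => // u v /HXY; apply: HY. Qed.

End Comm.
Section Tool.
Variables (F : Type) (ar : F -> nat) (A : algebra ar) (al : A -> A -> Prop) (Hal : is_con al).

Definition evp (V : countType) (T : term ar (V + unit)) (e f : V -> A) (P : A * A) : A * A :=
  (eval (env2 e (fun _ => P.1)) T, eval (env2 f (fun _ => P.2)) T).

Definition upd (X : Type) n (c : 'I_n -> X) (i : 'I_n) (x : X) : 'I_n -> X :=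
  fun j => if j == i then x else c j.

Lemma Delta_inv (be : A -> A -> Prop) (R : A * A -> A * A -> Prop) :
  (forall P, R P P) -> (forall P Q, R P Q -> R Q P) ->
  (forall P Q S, R P Q -> R Q S -> R P S) ->
  (forall (V : countType) (T : term ar (V + unit)) (e f : V -> A) u v,
     (forall x, al (e x) (f x)) -> be u v -> R (evp T e f (u,u)) (evp T e f (v,v))) ->
  forall p q : Aalpha Hal, Delta Hal be p q -> R (sval p) (sval q).
Proof.
move=> Rr Rs Rt Hgen p q H.
pose Th := fun p q : Aalpha Hal => forall (V : countType) T (e f : V -> A),
  (forall x, al (e x) (f x)) -> R (evp T e f (sval p)) (evp T e f (sval q)).
have single : forall f0 (c : 'I_(ar f0) -> Acar al) i (P Q : Aalpha Hal), Th P Q ->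
    Th (Aop Hal (upd c i P)) (Aop Hal (upd c i Q)).
  move=> f0 c i P Q HPQ V T e f he.
  pose sig := fun s : V + unit => match s with
    | inl v => @Var F ar ((V + 'I_(ar f0)) + unit)%type (inl (inl v))
    | inr _ => App (f:=f0) (fun j => if j == i then Var (inr tt) else Var (inl (inr j))) end.
  pose e' := fun s : (V + 'I_(ar f0))%type => match s with inl v => e v | inr j => (sval (c j)).1 end.
  pose f' := fun s : (V + 'I_(ar f0))%type => match s with inl v => f v | inr j => (sval (c j)).2 end.
  have he' : forall x, al (e' x) (f' x).
    by move=> [x|j]; [apply: he|apply: (svalP (c j))].
  have Ev : forall (g : V -> A) (g' : 'I_(ar f0) -> A) (h : 'I_(ar f0) -> A * A) (k : (A * A) -> A) (X : Aalpha Hal),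
      (forall j, g' j = k (sval (c j))) ->
      (forall j, h j = sval (upd c i X j)) ->
      eval (env2 (fun s => match s with inl v => g v | inr j => g' j end) (fun _ => k (sval X))) (tsubst sig T)
      = eval (env2 g (fun _ => op (fun j => k (h j)))) T.
    move=> g g' h k X Hg' Hh; rewrite eval_subst; apply: eval_ext => -[v|[]] //=.
    f_equal; apply: functional_extensionality => j; rewrite Hh /upd.
    by case: (j == i) => //=; rewrite Hg'.
  have := HPQ _ (tsubst sig T) e' f' he'.
  rewrite /evp.
  rewrite (Ev e _ (fun j => sval (upd c i P j)) fst P) // (Ev f _ (fun j => sval (upd c i P j)) snd P) //.
  by rewrite (Ev e _ (fun j => sval (upd c i Q j)) fst Q) // (Ev f _ (fun j => sval (upd c i Q j)) snd Q).
have HTh : is_con (A := Aalpha Hal) Th.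
  split.
  - by move=> ? V T e f he; apply: Rr.
  - by move=> x y Hxy V T e f he; apply: Rs; apply: Hxy.
  - by move=> x y z H1 H2 V T e f he; apply: (Rt _ _ _ (H1 V T e f he) (H2 V T e f he)).
  - move=> f0 x y Hxy.
    pose mix := fun k (j : 'I_(ar f0)) => if val j < k then y j else x j.
    have Hk : forall k, k <= ar f0 -> Th (Aop Hal x) (Aop Hal (mix k)).
      elim=> [|k IH] Hk.
        have -> : mix 0 = x by apply: functional_extensionality.
        by move=> V T e f he; apply: Rr.
      have Hkn : k < ar f0 by [].
      pose i := Ordinal Hkn.
      have E1 : mix k.+1 = upd (mix k) i (y i).
        apply: functional_extensionality => j; rewrite /mix /upd.
        case: eqP => [->|/eqP Hji] /=; first by rewrite ltnSn.
        rewrite ltnS leq_eqVlt; case: eqP => // Hjk.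
        by exfalso; move/negP: Hji; apply; apply/eqP; apply: val_inj.
      have E0 : mix k = upd (mix k) i (x i).
        apply: functional_extensionality => j; rewrite /mix /upd.
        by case: eqP => [->|] //=; rewrite ltnn.
      move=> V T e f he.
      apply: (Rt _ _ _ (IH (ltnW Hk) V T e f he)).
      have := single f0 (mix k) i (x i) (y i) (Hxy i) V T e f he.
      by rewrite -E0 -E1.
    have -> : y = mix (ar f0).
      by apply: functional_extensionality => j; rewrite /mix ltn_ord.
    exact: Hk.
have Hpq : Th p q.
  apply: H => // u v [H1 [H2 H3]] V T e f he.
  case: u H1 H3 => [[u1 u2] Hu] /= H1 H3; case: v H2 H3 => [[v1 v2] Hv] /= H2 H3.
  rewrite /evp /= -H1 -H2; exact: Hgen.
have := Hpq void (Var (inr tt)) (fun v => match v with end) (fun v => match v with end) (fun v => match v with end).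
by rewrite /evp /=; case: (sval p); case: (sval q).
Qed.

End Tool.
Section DlSec.
Variables (F : Type) (ar : F -> nat) (A : algebra ar) (al : A -> A -> Prop) (Hal : is_con al).

Definition Dl (be : A -> A -> Prop) (x y z w : A) : Prop :=
  exists (H : al x y) (H' : al z w),
    Delta Hal be (exist (fun p : A * A => al p.1 p.2) (x,y) H) (exist (fun p : A * A => al p.1 p.2) (z,w) H').

Variable be : A -> A -> Prop.

Lemma Dl_iff x y z w (H : al x y) (H' : al z w) :
  Delta Hal be (exist (fun p : A * A => al p.1 p.2) (x,y) H) (exist (fun p : A * A => al p.1 p.2) (z,w) H')
  <-> Dl be x y z w.
Proof.
split; first by exists H, H'.
case=> H1 [H2 D].
by rewrite (proof_irrelevance _ H H1) (proof_irrelevance _ H' H2).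
Qed.

Lemma Dl_al x y z w : Dl be x y z w -> al x y /\ al z w.
Proof. by case=> H [H' _]. Qed.

Lemma Dl_refl x y : al x y -> Dl be x y x y.
Proof. by move=> H; exists H, H; apply: (con_refl (Cg_con _)). Qed.

Lemma Dl_sym x y z w : Dl be x y z w -> Dl be z w x y.
Proof. by case=> H [H' D]; exists H', H; apply: (con_sym (Cg_con _)). Qed.

Lemma Dl_trans x y z w p q : Dl be x y z w -> Dl be z w p q -> Dl be x y p q.
Proof.
case=> H [H' D] [H3 [H2 D2]]; exists H, H2.
rewrite (proof_irrelevance _ H3 H') in D2.
exact: (con_trans (Cg_con _) D D2).
Qed.

Lemma Dl_gen u v : be u v -> Dl be u u v v.
Proof.
move=> Huv; exists (con_refl Hal u), (con_refl Hal v).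
by apply: Cg_gen.
Qed.

Lemma Dl_eval V (t : term ar V) (x y z w : V -> A) :
  (forall v, Dl be (x v) (y v) (z v) (w v)) ->
  Dl be (eval x t) (eval y t) (eval z t) (eval w t).
Proof.
move=> Hv; elim: t => [v|f args IH] //=.
have Hxy : forall o, al (eval x (args o)) (eval y (args o)) by move=> o; case: (IH o).
have Hzw : forall o, al (eval z (args o)) (eval w (args o)) by move=> o; case: (IH o) => ? [].
pose P := fun o => exist (fun p : A * A => al p.1 p.2) (eval x (args o), eval y (args o)) (Hxy o).
pose Q := fun o => exist (fun p : A * A => al p.1 p.2) (eval z (args o), eval w (args o)) (Hzw o).
have D : Delta Hal be (Aop Hal P) (Aop Hal Q).
  apply: (con_compat (Cg_con _)) => o.
  exact: (proj2 (Dl_iff _ _) (IH o)).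
exact: (proj1 (Dl_iff (proj2_sig (Aop Hal P)) (proj2_sig (Aop Hal Q))) D).
Qed.

Lemma Dl_app3 d x1 y1 z1 w1 x2 y2 z2 w2 x3 y3 z3 w3 :
  Dl be x1 y1 z1 w1 -> Dl be x2 y2 z2 w2 -> Dl be x3 y3 z3 w3 ->
  Dl be (app3 d x1 x2 x3) (app3 d y1 y2 y3) (app3 d z1 z2 z3) (app3 d w1 w2 w3).
Proof.
move=> H1 H2 H3; apply: Dl_eval => i.
by case: (val i) => [|[|?]].
Qed.

Lemma Dl_beta : is_con be -> forall x y z w, Dl be x y z w -> be x z /\ be y w.
Proof.
move=> Hbe x y z w [H [H' D]].
have := Delta_inv (R := fun P Q => be P.1 Q.1 /\ be P.2 Q.2) _ _ _ _ D; apply.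
- by move=> P; split; apply: (con_refl Hbe).
- by move=> P Q [] ? ?; split; apply: (con_sym Hbe).
- by move=> P Q S [] ? ? [] ? ?; split; apply: (con_trans Hbe); eauto.
- move=> V T e f u v he Huv; rewrite /evp /=.
  by split; apply: (eval_con Hbe) => -[s|s] //=; apply: (con_refl Hbe).
Qed.

Lemma Dl_mono (ga : A -> A -> Prop) : (forall x y, be x y -> ga x y) ->
  forall x y z w, Dl be x y z w -> Dl ga x y z w.
Proof.
move=> Hs x y z w [H [H' D]]; exists H, H'.
apply: Cg_mono D => p q [? [? ?]]; split => //; split => //; exact: Hs.
Qed.

End DlSec.
Section D0.
Variables (F : Type) (ar : F -> nat) (A : algebra ar) (al : A -> A -> Prop) (Hal : is_con al).
Variables (be : A -> A -> Prop) (Hbe : is_con be) (d : term ar 'I_3).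
Hypothesis Mal : forall x y, al x y -> app3 d x x y = y /\ app3 d y x x = y.

Let mal1 x y : al x y -> app3 d x x y = y. Proof. by case/Mal. Qed.
Let mal2 x y : al x y -> app3 d y x x = y. Proof. by case/Mal. Qed.
Let aR := con_refl Hal.
Let aS := con_sym Hal.
Let aT := con_trans Hal.

Definition d0 y w := al y w /\ Dl Hal be y y y w.

Lemma d0_con : is_con d0.
Proof.
split.
- by move=> x; split; [apply: aR|apply: Dl_refl; apply: aR].
- move=> x y [Hxy D]; split; first exact: aS.
  have := Dl_app3 d (Dl_refl Hal be (aR x)) D (Dl_refl Hal be (aR y)).
  by rewrite (mal1 Hxy) (mal2 (aS Hxy)).
- move=> x y z [Hxy D1] [Hyz D2]; split; first exact: (aT Hxy).
  have := Dl_app3 d D2 (Dl_refl Hal be (aR y)) (Dl_refl Hal be Hxy).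
  rewrite (mal1 (aS Hxy)) (mal1 (aR y)) (mal2 Hyz) => H; exact: Dl_trans D1 H.
- move=> f x y H; split.
    by apply: (con_compat Hal) => i; case: (H i).
  have := @Dl_eval _ _ _ _ Hal be _ (App (f:=f) (fun i => Var i)) x x x y.
  by apply => i; case: (H i).
Qed.

Lemma d0_TC_ba : TC be al d0.
Proof.
move=> t a b c e Hab Hce [HXY D1]; split.
  by apply: (eval_con Hal) => -[n|n] //=; apply: aR.
have D2 := @Dl_eval _ _ _ _ Hal be _ t (env2 a c) (env2 a e) (env2 b c) (env2 b e).
have D3 := @Dl_eval _ _ _ _ Hal be _ t (env2 a c) (env2 a c) (env2 b c) (env2 b c).
have {}D2 : Dl Hal be (eval (env2 a c) t) (eval (env2 a e) t) (eval (env2 b c) t) (eval (env2 b e) t).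
  by apply: D2 => -[n|n] /=; [apply: Dl_gen|apply: Dl_refl].
have {}D3 : Dl Hal be (eval (env2 a c) t) (eval (env2 a c) t) (eval (env2 b c) t) (eval (env2 b c) t).
  by apply: D3 => -[n|n] /=; [apply: Dl_gen|apply: Dl_refl; apply: aR].
apply: Dl_trans (Dl_sym D3) _.
exact: Dl_trans D1 D2.
Qed.

Lemma d0_TC_ab : TC al be d0.
Proof.
move=> t a b c e Hab Hce [HXY D1].
set X := eval _ t in HXY D1 *; set Y := eval _ t in HXY D1 *.
set X' := eval (fun v => match v with inl n => b n | inr n => c n end) t.
set Y' := eval (fun v => match v with inl n => b n | inr n => e n end) t.
have HXX' : al X X' by apply: (eval_con Hal) => -[n|n] //=; apply: aR.
have HYY' : al Y Y' by apply: (eval_con Hal) => -[n|n] //=; apply: aR.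
have HX'Y' : al X' Y' by apply: aT (aT (aS HXX') HXY) HYY'.
have D2 : Dl Hal be X X' Y Y'.
  by apply: Dl_eval => -[n|n] /=; [apply: Dl_refl|apply: Dl_gen].
have [_ HbXY] := Dl_beta Hbe D1.
pose K := app3 d Y X X'.
have HKX' : al K X'.
  by have := app3_con Hal d (aS HXY) (aR X) (aR X'); rewrite (mal1 HXX').
have HbKX' : be K X'.
  by have := app3_con Hbe d (con_sym Hbe HbXY) (con_refl Hbe X) (con_refl Hbe X'); rewrite (mal1 HXX').
have E1 : Dl Hal be X' X' K Y'.
  have := Dl_app3 d D2 (Dl_refl Hal be HXX') (Dl_refl Hal be (aR X')).
  by rewrite (mal1 HXX') (mal1 (aR X')) (mal2 HX'Y').
have E2 : Dl Hal be X' X' X' K.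
  have := Dl_app3 d D1 (Dl_refl Hal be (aR X)) (Dl_refl Hal be (aR X')).
  by rewrite (mal1 HXX').
have E3 : Dl Hal be K K X' X' by apply: Dl_gen.
split => //.
apply: Dl_sym.
have := Dl_app3 d (Dl_sym E2) E3 (Dl_sym E1).
by rewrite (mal2 HKX') (mal1 (aT HKX' HX'Y')) (mal1 (aR X')).
Qed.

Lemma d0_transport c y w : d0 y w -> al c y -> Dl Hal be c y c w.
Proof.
move=> [Hyw D] Hcy.
have := Dl_app3 d D (Dl_refl Hal be (aR y)) (Dl_refl Hal be (Hcy)).
by rewrite (mal1 (aS Hcy)) (mal1 (aR y)) (mal2 Hyw).
Qed.

End D0.
Section Part1.
Variables (F : Type) (ar : F -> nat) (E : identities ar) (A : algebra ar) (HA : in_variety E A).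

Lemma con_total : is_con (A := A) (fun _ _ => True).
Proof. by split. Qed.

Lemma con_and (al be : A -> A -> Prop) : is_con al -> is_con be -> is_con (fun x y => al x y /\ be x y).
Proof.
move=> Ha Hb; split.
- by move=> x; split; [apply: (con_refl Ha)|apply: (con_refl Hb)].
- by move=> x y [] ? ?; split; [apply: (con_sym Ha)|apply: (con_sym Hb)].
- by move=> x y z [] ? ? [] ? ?; split; [apply: (con_trans Ha)|apply: (con_trans Hb)]; eauto.
- by move=> f x y H; split; [apply: (con_compat Ha)|apply: (con_compat Hb)] => i; case: (H i).
Qed.

Definition rho1 V : V + unit -> term ar (((V + V) + unit) + unit) :=
  fun s => match s with inl v => Var (inl (inl (inl v))) | inr _ => Var (inr tt) end.
Definition rho2 V : V + unit -> term ar (((V + V) + unit) + unit) :=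
  fun s => match s with inl v => Var (inl (inl (inr v))) | inr _ => Var (inr tt) end.

Lemma part1 (al be : A -> A -> Prop) (Hal : is_con al) (Hbe : is_con be) d :
  is_difference_term E d ->
  forall (a b e : A) (Hab : al a b) (Hae : al a e),
  Delta Hal be (exist _ (a, b) Hab) (exist _ (a, e) Hae) -> comm al be b e.
Proof.
move=> Hd a b e Hab Hae D.
have ex1 : forall x y : A, app3 d x x y = y.
  by move=> x y; case: (Hd A HA _ con_total x y I).
have dC := comm_con al be.
have := Delta_inv (R := fun P Q => be P.2 Q.2 /\ forall C, comm al be (app3 d P.2 P.1 C) (app3 d Q.2 Q.1 C)) _ _ _ _ D.
case.
- by move=> P; split; [apply: (con_refl Hbe)|move=> C; apply: (con_refl dC)].
- by move=> P Q [H1 H2]; split; [apply: (con_sym Hbe)|move=> C; apply: (con_sym dC)].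
- move=> P Q S [H1 H2] [H3 H4]; split; first exact: (con_trans Hbe H1 H3).
  by move=> C; apply: (con_trans dC (H2 C) (H4 C)).
- move=> V T e0 f0 u v he Huv; rewrite /evp /=; split.
    by apply: (eval_con Hbe) => -[s|s] //=; apply: (con_refl Hbe).
  move=> C.
  pose s := tsubst (sel3 (tsubst (@rho1 V) T) (tsubst (@rho2 V) T) (Var (inl (inr tt)))) d.
  pose a' := fun z : ((V + V) + unit)%type => match z with inl (inl v) => e0 v | inl (inr v) => e0 v | inr _ => C end.
  pose b' := fun z : ((V + V) + unit)%type => match z with inl (inl v) => f0 v | inl (inr v) => e0 v | inr _ => C end.
  have Ev : forall (g : (V + V + unit)%type -> A) (w : A),
      eval (env2 g (fun _ : unit => w)) s =
      app3 d (eval (env2 (fun v => g (inl (inl v))) (fun _ => w)) T)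
             (eval (env2 (fun v => g (inl (inr v))) (fun _ => w)) T) (g (inr tt)).
    move=> g w; rewrite /s eval_app3 !eval_subst /=.
    by congr app3; apply: eval_ext => -[?|[]].
  have := @TC_gen _ _ A al be (comm al be) (con_refl Hal) (con_refl Hbe) _ _ s a' b' (fun _ => u) (fun _ => v) (@comm_TC _ _ A al be).
  rewrite !(Ev a') !(Ev b') /= !ex1; apply.
  + by move=> [[x|x]|[]] /=; [apply: he|apply: (con_refl Hal)|apply: (con_refl Hal)].
  + by [].
  + exact: (con_refl dC).
move=> /= Hbbe /(_ a) H1.
have H2 := @TC_gen _ _ A al be (comm al be) (con_refl Hal) (con_refl Hbe) unit unit
   (tsubst (sel3 (Var (inr tt)) (Var (inl tt)) (Var (inl tt))) d)
   (fun _ => a) (fun _ => b) (fun _ => b) (fun _ => e) (@comm_TC _ _ A al be).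
rewrite !eval_app3 /= ex1 in H2.
have {}H2 := H2 (fun _ => Hab) (fun _ => Hbbe) H1.
have Heb : al e b by apply: (con_trans Hal (con_sym Hal Hae) Hab).
have Heb' : be e b by apply: (con_sym Hbe).
have [_ H3] := Hd A HA _ (con_and Hal Hbe) e b (conj Heb Heb').
have H4 := comm_mono (fun x y (H : al x y /\ be x y) => proj1 H) (fun x y H => proj2 H) H3.
exact: (con_trans dC H2 H4).
Qed.

End Part1.
Section Parts.
Variables (F : Type) (ar : F -> nat) (E : identities ar) (A : algebra ar) (HA : in_variety E A).

Definition swp V : V + unit -> term ar (unit + V) :=
  fun s => match s with inl v => Var (inr v) | inr _ => Var (inl tt) end.

Lemma eval_swp (V : Type) (T : term ar (V + unit)) (g : V -> A) (u : A) :
  eval (env2 (fun _ : unit => u) g) (tsubst (@swp V) T) = eval (env2 g (fun _ => u)) T.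
Proof. by rewrite eval_subst; apply: eval_ext => -[v|[]]. Qed.

Lemma Mal_weak (al : A -> A -> Prop) (Hal : is_con al) d :
  is_weak_difference_term E d -> abelian al ->
  forall x y, al x y -> app3 d x x y = y /\ app3 d y x x = y.
Proof.
move=> Hd Hab x y Hxy; have [H1 H2] := Hd A HA al Hal x y Hxy.
by split; [apply: Hab|symmetry; apply: Hab].
Qed.

Lemma Mal_diff (al : A -> A -> Prop) (Hal : is_con al) d :
  is_difference_term E d -> abelian al ->
  forall x y, al x y -> app3 d x x y = y /\ app3 d y x x = y.
Proof.
move=> Hd Hab x y Hxy; split; first by case: (Hd A HA _ (@con_total _ _ A) x y I).
have [_ H2] := Hd A HA al Hal y x (con_sym Hal Hxy).
exact: Hab.
Qed.

Lemma part2 (al be : A -> A -> Prop) (Hal : is_con al) (Hbe : is_con be) d :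
  is_weak_difference_term E d -> abelian al ->
  forall b e : A,
     (exists (a : A) (Hab : al a b) (Hae : al a e),
        Delta Hal be (exist _ (a, b) Hab) (exist _ (a, e) Hae)) <->
     comm be al b e.
Proof.
move=> Hd Habel b e.
have Mal := Mal_weak Hal Hd Habel.
have mal1 : forall x y, al x y -> app3 d x x y = y by move=> x y /Mal [].
have mal2 : forall x y, al x y -> app3 d y x x = y by move=> x y /Mal [].
split.
- case=> a [Hab [Hae D]].
  have D1 := proj1 (Dl_iff _ _ _ _) D.
  have Hbe' : al b e by apply: (con_trans Hal (con_sym Hal Hab) Hae).
  have := Dl_app3 d (Dl_refl Hal be (con_refl Hal b)) (Dl_refl Hal be Hab) D1.
  rewrite (mal2 _ _ Hab) (mal1 _ _ (con_refl Hal b)) (mal1 _ _ Hbe').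
  case=> H1 [H2 D2].
  have := Delta_inv (R := fun P Q => comm be al P.1 P.2 <-> comm be al Q.1 Q.2) _ _ _ _ D2.
  case.
  + by [].
  + by move=> P Q H; split => /H.
  + by move=> P Q S H H'; split => [/H/H'|/H'/H].
  + move=> V T e0 f0 u v he Huv; rewrite /evp /=.
    have K : forall u v, be u v -> comm be al (eval (env2 e0 (fun=> u)) T) (eval (env2 f0 (fun=> u)) T) ->
        comm be al (eval (env2 e0 (fun=> v)) T) (eval (env2 f0 (fun=> v)) T).
      move=> u' v' Huv'.
      have := @TC_gen _ _ A be al (comm be al) (con_refl Hbe) (con_refl Hal) _ _ (tsubst (@swp V) T)
        (fun _ => u') (fun _ => v') e0 f0 (@comm_TC _ _ A be al) (fun _ => Huv') he.
      by rewrite !eval_swp.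
    by split; apply: K => //; apply: (con_sym Hbe).
  + by move=> /= H _; apply: H; apply: (con_refl (comm_con _ _)).
- move=> H.
  have Hbe' : al b e := comm_sub_r Hal H.
  exists b, (con_refl Hal b), Hbe'.
  apply/(Dl_iff _ _ (con_refl Hal b) Hbe').
  have [_ D] := comm_least (d0_con Hal be Mal) (@d0_TC_ba _ _ A al Hal be) H.
  exact: D.
Qed.

Lemma TC_eq (ga al : A -> A -> Prop) : (forall u v, comm ga al u v -> u = v) -> TC ga al eq.
Proof.
move=> H t a b c e Hab Hce Eq; apply: H.
apply: (@comm_TC _ _ A ga al t a b c e Hab Hce).
by rewrite Eq; apply: (con_refl (comm_con _ _)).
Qed.

Lemma part3 (al : A -> A -> Prop) (Hal : is_con al) d :
  is_weak_difference_term E d -> abelian al ->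
  forall ga : A -> A -> Prop, is_con ga ->
     (forall x y, al x y -> ga x y) ->
     (forall x y, ga x y -> centralizer al x y) ->
     forall p q : Aalpha Hal,
       Delta Hal al p q <-> (Delta Hal ga p q /\ alphahat p q).
Proof.
move=> Hd Habel ga Hga Hsub Hcent [[x y] /= Hxy] [[z w] /= Hzw].
have Mal := Mal_weak Hal Hd Habel.
have mal1 : forall x y, al x y -> app3 d x x y = y by move=> x' y' /Mal [].
have mal2 : forall x y, al x y -> app3 d y x x = y by move=> x' y' /Mal [].
have aR := con_refl Hal; have aS := con_sym Hal; have aT := con_trans Hal.
split.
- move=> D; split.
    by apply: Cg_mono D => p q [? [? ?]]; split => //; split => //; apply: Hsub.
  have [H1 _] := Dl_beta Hal (proj1 (Dl_iff _ _ _ _) D).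
  rewrite /alphahat /=; split; [exact: Hxy|exact: H1|exact: (aT x z w H1 Hzw)].
- case=> D; rewrite /alphahat /= => -[_ Hxz Hxw].
  apply/(Dl_iff _ _ Hxy Hzw).
  pose w' := app3 d y x z.
  have Hzw' : al z w'.
    by have := app3_con Hal d (con_sym Hal Hxy) (aR x) (aR z); rewrite (mal1 _ _ Hxz) => /aS.
  have D1 : Dl Hal al x y z w'.
    have := Dl_app3 d (Dl_refl Hal al Hxy) (Dl_refl Hal al (aR x)) (Dl_gen Hal Hxz).
    by rewrite (mal1 _ _ (aR x)) (mal2 _ _ Hxy) (mal1 _ _ Hxz).
  have D2 : Dl Hal ga z w z w' := Dl_trans (Dl_sym (proj1 (Dl_iff _ _ _ _) D)) (Dl_mono Hsub D1).
  have Hww' : al w w' := aT _ _ _ (aS _ _ Hzw) Hzw'.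
  have D3 := Dl_app3 d D2 (Dl_refl Hal ga Hzw) (Dl_refl Hal ga (aR w)).
  rewrite (mal1 _ _ Hzw) (mal1 _ _ (aR w)) (mal2 _ _ Hww') in D3.
  case: D3 => H1 [H2 D3].
  have := Delta_inv (R := fun P Q => P.1 = P.2 <-> Q.1 = Q.2) _ _ _ _ D3.
  case.
  + by [].
  + by move=> P Q H; split => /H.
  + by move=> P Q S H H'; split => [/H/H'|/H'/H].
  + move=> V T e0 f0 u v he Huv; rewrite /evp /=.
    have [ga0 [Hga0 [Hc Huv0]]] := Hcent u v Huv.
    have K : forall u v, ga0 u v -> eval (env2 e0 (fun=> u)) T = eval (env2 f0 (fun=> u)) T ->
        eval (env2 e0 (fun=> v)) T = eval (env2 f0 (fun=> v)) T.
      move=> u' v' Huv'.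
      have := @TC_gen _ _ A ga0 al eq (con_refl Hga0) (con_refl Hal) _ _ (tsubst (@swp V) T)
        (fun _ => u') (fun _ => v') e0 f0 (TC_eq Hc) (fun _ => Huv') he.
      by rewrite !eval_swp.
    by split; apply: K => //; apply: (con_sym Hga0).
  + move=> /= H _; have Ew := H erefl.
    by rewrite Ew.
Qed.

Lemma part4 (al be : A -> A -> Prop) (Hal : is_con al) (Hbe : is_con be) m :
  is_difference_term E m -> abelian al ->
   forall (a b c d : A) (Hab : al a b) (Hcd : al c d),
     let P := exist (fun p : A * A => al p.1 p.2) (a, b) Hab in
     let Q := exist (fun p : A * A => al p.1 p.2) (c, d) Hcd in
     [/\ (Delta Hal be P Q ->
          (exists Hm : al c (app3 m b a c),
             Delta Hal be P (exist _ (c, app3 m b a c) Hm))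
          /\ comm al be d (app3 m b a c)),
         ((exists Hm : al c (app3 m b a c),
             Delta Hal be P (exist _ (c, app3 m b a c) Hm))
          /\ comm al be d (app3 m b a c) ->
          be c a /\ al a b /\ comm al be d (app3 m b a c))
       & (be c a /\ al a b /\ comm al be d (app3 m b a c) ->
          Delta Hal be P Q)].
Proof.
move=> Hm Habel a b c e Hab Hce P Q.
have Mal := Mal_diff Hal Hm Habel.
have mal1 : forall x y, al x y -> app3 m x x y = y by move=> x' y' /Mal [].
have mal2 : forall x y, al x y -> app3 m y x x = y by move=> x' y' /Mal [].
have ex1 : forall x y : A, app3 m x x y = y by move=> x y; case: (Hm A HA _ (@con_total _ _ A) x y I).
have aR := con_refl Hal; have aS := con_sym Hal; have aT := con_trans Hal.
set K := app3 m b a c.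
have HcK : al c K.
  by have := app3_con Hal m (con_sym Hal Hab) (aR a) (aR c); rewrite ex1 => /aS.
have DK : be a c -> Dl Hal be a b c K.
  move=> Hac.
  have := Dl_app3 m (Dl_refl Hal be Hab) (Dl_refl Hal be (aR a)) (Dl_gen Hal Hac).
  by rewrite ex1 (mal2 _ _ Hab) ex1.
split.
- move=> D.
  have D1 := proj1 (Dl_iff _ _ _ _) D.
  have [Hac _] := Dl_beta Hbe D1.
  have D2 := DK Hac.
  split; first by exists HcK; apply/(Dl_iff _ _ Hab HcK).
  apply: (@part1 _ _ E A HA al be Hal Hbe m Hm c e K Hce HcK).
  apply/(Dl_iff _ _ Hce HcK).
  exact: Dl_trans (Dl_sym D1) D2.
- case=> [[Hm' D] Hc]; split; last by split.
  have [Hac _] := Dl_beta Hbe (proj1 (Dl_iff _ _ _ _) D).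
  exact: (con_sym Hbe).
- case=> Hca [_ Hc].
  apply/(Dl_iff _ _ Hab Hce).
  have D2 := DK (con_sym Hbe Hca).
  have H0 := comm_least (d0_con Hal be Mal) (d0_TC_ab Hbe Mal) Hc.
  have H0' := con_sym (d0_con Hal be Mal) H0.
  exact: Dl_trans D2 (d0_transport Mal H0' HcK).
Qed.

End Parts.

Theorem lemma2p1 (F : Type) (ar : F -> nat) (E : identities ar)
  (A : algebra ar) (al be : A -> A -> Prop)
  (HA : in_variety E A) (Hal : is_con al) (Hbe : is_con be) :
  (* (1) *)
  (has_difference_term E ->
   forall (a b d : A) (Hab : al a b) (Had : al a d),
     Delta Hal be (exist _ (a, b) Hab) (exist _ (a, d) Had) ->
     comm al be b d) /\
  (* (2) *)
  (has_weak_difference_term E -> abelian al ->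
   forall b d : A,
     (exists (a : A) (Hab : al a b) (Had : al a d),
        Delta Hal be (exist _ (a, b) Hab) (exist _ (a, d) Had)) <->
     comm be al b d) /\
  (* (3) *)
  (has_weak_difference_term E -> abelian al ->
   forall ga : A -> A -> Prop, is_con ga ->
     (forall x y, al x y -> ga x y) ->
     (forall x y, ga x y -> centralizer al x y) ->
     forall p q : Aalpha Hal,
       Delta Hal al p q <-> (Delta Hal ga p q /\ alphahat p q)) /\
  (* (4) *)
  (forall m : term ar 'I_3, is_difference_term E m -> abelian al ->
   forall (a b c d : A) (Hab : al a b) (Hcd : al c d),
     let P := exist (fun p : A * A => al p.1 p.2) (a, b) Hab in
     let Q := exist (fun p : A * A => al p.1 p.2) (c, d) Hcd in
     [/\ (Delta Hal be P Q ->
          (exists Hm : al c (app3 m b a c),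
             Delta Hal be P (exist _ (c, app3 m b a c) Hm))
          /\ comm al be d (app3 m b a c)),
         ((exists Hm : al c (app3 m b a c),
             Delta Hal be P (exist _ (c, app3 m b a c) Hm))
          /\ comm al be d (app3 m b a c) ->
          be c a /\ al a b /\ comm al be d (app3 m b a c))
       & (be c a /\ al a b /\ comm al be d (app3 m b a c) ->
          Delta Hal be P Q)]).
Proof.
split; first by case=> d Hd; exact: (@part1 _ _ E A HA al be Hal Hbe d Hd).
split; first by case=> d Hd Hab; exact: (@part2 _ _ E A HA al be Hal Hbe d Hd Hab).
split; first by case=> d Hd Hab; exact: (@part3 _ _ E A HA al Hal d Hd Hab).
by move=> m Hm Hab; exact: (@part4 _ _ E A HA al be Hal Hbe m Hm Hab).
Qed.
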